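(* Let $L/K$ be a finite extension, $K'/K$ a finite Galois extension, and $M/K$ a finite extension with $L\subseteq M$ (all inside $\bar K$), such that $\tilde L$ and $K'$ are linearly disjoint over $K$ and $\tilde M$ and $K'$ are linearly disjoint over $K$. Then $\rho_K(M,L)=\rho_{K'}(MK',LK')$.
   Context: $K$ is a perfect field with a fixed algebraic closure $\bar K$; $\tilde L,\tilde M$ denote Galois closures over $K$ in $\bar K$. Root capacity: for $\alpha\in\bar K$ with minimal polynomial $f$ over $K$ and an extension $M/K$, $\rho_K(M,\alpha)$ is the number of roots of $f$ contained in $M$. For a finite extension $L/K$, $\rho_K(M,L):=\rho_K(M,\alpha)$ for any primitive element $\alpha$ with $L=K(\alpha)$ (this is independent of the choice of $\alpha$). $\rho_{K'}$ is defined analogously with base field $K'$. *)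

(* Defs.v *)
From HB Require Import structures.
From mathcomp Require Import all_boot all_order all_algebra all_fingroup all_field.
From Stdlib Require Import ClassicalEpsilon.
Set Implicit Arguments. Unset Strict Implicit. Unset Printing Implicit Defensive.
Import GRing.Theory.
Local Open Scope ring_scope.

Definition perfect_field (F : fieldType) : Prop :=
  forall p : nat, p \in [pchar F] -> forall x : F, exists y : F, y ^+ p = x.

Section RootCapacity.
Variables (F : fieldType) (E : splittingFieldType F).

Definition roots_in_list (f : {poly E}) (M : {vspace E}) (s : seq E) : Prop :=
  uniq s /\ forall x : E, x \in s <-> (x \in M /\ root f x).

(* number of roots of f contained in M (f <> 0, so such a list exists) *)
Definition nroots_in (f : {poly E}) (M : {vspace E}) : nat :=
  size (epsilon (inhabits [::]) (roots_in_list f M)).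

Definition rho_elt (K M : {subfield E}) (a : E) : nat :=
  nroots_in (minPoly K a) M.

Definition prim_elt (K L : {subfield E}) : E :=
  epsilon (inhabits 0) (fun a : E => (<<K; a>>%VS = L :> {vspace E})).

Definition rho (K M L : {subfield E}) : nat := rho_elt K M (prim_elt K L).

Definition is_gal_closure (K L N : {subfield E}) : Prop :=
  (L <= N)%VS /\ galois K N /\
  forall N' : {subfield E}, (L <= N')%VS -> galois K N' -> (N <= N')%VS.

Definition gal_closure (K L : {subfield E}) : {subfield E} :=
  epsilon (inhabits 1%AS) (is_gal_closure K L).

Definition lin_disjoint (K A B : {subfield E}) : Prop :=
  (\dim_K (A * B)%AS = \dim_K A * \dim_K B)%N.

End RootCapacity.

(* Main.v *)
Require Import Defs.
From HB Require Import structures.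
From mathcomp Require Import all_boot all_order all_algebra all_fingroup all_field.
From Stdlib Require Import ClassicalEpsilon.
From mathcomp Require Import zify.
Set Implicit Arguments. Unset Strict Implicit. Unset Printing Implicit Defensive.
Import GRing.Theory.
Local Open Scope ring_scope.

Lemma sep_all (F : fieldType) (E : splittingFieldType F) :
  perfect_field F -> forall x : E, separable_element 1 x.
Proof.
move=> perf x; apply/negPn/negP => /separablePn_pchar [p pE [g g1 Dm]].
have pF : p \in [pchar F] by rewrite -(fmorph_pchar (in_alg E)).
have p_pr := pcharf_prime pE; have p_gt1 := prime_gt1 p_pr.
have hy : forall i, exists y : F, (y ^+ p)%:A = g`_i.
  move=> i; have /vlineP[k ->] : g`_i \in 1%VS by apply: (polyOverP g1).
  by have [y <-] := perf p pF k; exists y.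
pose y i := epsilon (inhabits 0) (fun y : F => (y ^+ p)%:A = g`_i).
have Dy i : (y i ^+ p)%:A = g`_i by apply: (epsilon_spec (inhabits 0) _ (hy i)).
pose h := \poly_(i < size g) ((y i)%:A : E).
have h1 : h \is a polyOver 1%VS.
  by apply/polyOver_poly => i _; rewrite rpredZ // mem1v.
have hx : root h x.
  apply/rootP; suff: h.[x] ^+ p = 0 by move/eqP; rewrite expf_eq0 => /andP[_ /eqP].
  rewrite horner_poly -(pFrobenius_autE pE) rmorph_sum /=.
  transitivity (minPoly 1 x).[x]; last exact: minPolyxx.
  rewrite Dm horner_comp hornerXn horner_coef.
  apply: eq_bigr => i _.
  rewrite pFrobenius_autE exprMn -Dy -exprM mulnC exprM; congr (_ * _).
  by rewrite -[(y i)%:A]/(in_alg E (y i)) -rmorphXn.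
have sz_m := size_minPoly 1 x.
have mnz : minPoly 1 x != 0 by rewrite -size_poly_gt0 sz_m.
have gnz : g != 0 by apply: contraNneq mnz => g0; rewrite Dm g0 comp_poly0.
have hnz : h != 0.
  apply/eqP => h0.
  have : lead_coef g != 0 by rewrite lead_coef_eq0.
  rewrite lead_coefE -Dy.
  have : h`_(size g).-1 = 0 by rewrite h0 coef0.
  rewrite coef_poly prednK ?size_poly_gt0 // leqnn => H.
  rewrite -[(_ ^+ p)%:A]/(in_alg E _) rmorphXn /= H.
  by rewrite expr0n /= gtn_eqF ?prime_gt0 // eqxx.
have := dvdp_leq hnz (minPoly_dvdp h1 hx).
have szh : (size h <= size g)%N by apply: size_poly.
have := size_comp_poly g 'X^p; rewrite size_polyXn /= -Dm sz_m /=.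
have : (0 < size g)%N by rewrite size_poly_gt0.
have : (0 < adjoin_degree 1 x)%N by rewrite /adjoin_degree.
move: (size g) (adjoin_degree 1 x) szh => n d szh ? ? E1 E2.
have : (n.-1 * 2 <= n.-1 * p)%N by rewrite leq_mul2l p_gt1 orbT.
move: E1 szh; case: (n) => [|m] //= E1 szh; move: (size h) E2 szh => s E2 szh; nia.
Qed.

Lemma gal_full (F : fieldType) (E : splittingFieldType F) :
  perfect_field F -> forall K : {subfield E}, galois K fullv.
Proof.
move=> perf K; apply: (@galoisS _ _ 1%AS); first by rewrite sub1v subvf.
rewrite /galois sub1v normalFieldf andbT /=.
by apply/separableP => y _; apply: sep_all.
Qed.

Lemma prim_spec (F : fieldType) (E : splittingFieldType F) (K X : {subfield E}) :
  perfect_field F -> (K <= X)%VS -> <<K; prim_elt K X>>%VS = X.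
Proof.
move=> perf sKX; rewrite /prim_elt.
apply: (@epsilon_spec _ (inhabits 0) (fun a : E => <<K; a>>%VS = X :> {vspace E})).
exists (separable_generator K X); apply/esym/eq_adjoin_separable_generator => //.
apply/separableP => y _; apply: (separable_elementS (sub1v K)); exact: sep_all.
Qed.

Lemma dim_gal (F : fieldType) (E : splittingFieldType F) (X : {subfield E}) :
  perfect_field F ->
  (\dim X * #|'Gal({:E} / X)%g| = #|'Gal({:E} / 1%AS)%g|)%N.
Proof.
move=> perf; rewrite -!galois_dim ?gal_full // mulnC -dim_sup_field ?subvf //.
by rewrite dimv1 divn1.
Qed.

Lemma gal_prod (F : fieldType) (E : splittingFieldType F) (X Y : {subfield E}) :
  'Gal({:E} / (X * Y)%AS)%g = ('Gal({:E} / X) :&: 'Gal({:E} / Y))%g.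
Proof.
apply/eqP; rewrite eqEsubset subsetI !galS ?field_subvMr ?field_subvMl //=.
rewrite galois_connection ?subvf //; apply: prodv_sub.
  by rewrite -galois_connection ?subvf ?subsetIl.
by rewrite -galois_connection ?subvf ?subsetIr.
Qed.

Lemma disj_mul (F : fieldType) (E : splittingFieldType F) (X Y : {subfield E}) :
  perfect_field F -> lin_disjoint 1%AS X Y ->
  ('Gal({:E} / X) * 'Gal({:E} / Y))%g = 'Gal({:E} / 1%AS)%g.
Proof.
move=> perf; rewrite /lin_disjoint dimv1 !divn1 => dXY.
have h1 := dim_gal X perf; have h2 := dim_gal Y perf.
have h3 := dim_gal (X * Y)%AS perf; rewrite gal_prod dXY in h3.
have h4 := mul_cardG 'Gal({:E} / X)%G 'Gal({:E} / Y)%G.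
have g0 : (0 < #|'Gal({:E} / 1%AS)%g|)%N by rewrite cardG_gt0.
apply/eqP; rewrite eqEcard mul_subG ?galS ?sub1v //=.
move: h1 h2 h3 h4 g0.
set g := #|'Gal({:E} / 1%AS)%g|; set a := #|'Gal({:E} / X)%g|.
set b := #|'Gal({:E} / Y)%g|; set c := #|('Gal({:E} / X) :&: 'Gal({:E} / Y))%g|.
set d := #|('Gal({:E} / X) * 'Gal({:E} / Y))%g|.
move=> h1 h2 h3 h4 g0.
have : (g * g = g * d)%N.
  rewrite -{1}h1 -{1}h2 -h3 mulnACA h4; lia.
by move/eqP; rewrite eqn_mul2l (gtn_eqF g0) /= => /eqP ->.
Qed.

Lemma gal_closure_spec (F : fieldType) (E : splittingFieldType F) (X : {subfield E}) :
  perfect_field F -> is_gal_closure 1%AS X (gal_closure 1%AS X).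
Proof.
move=> perf; rewrite /gal_closure.
apply: (@epsilon_spec _ (inhabits 1%AS) (is_gal_closure 1%AS X)).
pose C := (gcore 'Gal({:E} / X) 'Gal({:E} / 1%AS))%G.
have nC : (C <| 'Gal({:E} / 1%AS))%g by apply: gcore_normal; rewrite galS ?sub1v.
exists (fixedField C); split; last split.
- by rewrite -galois_connection ?subvf // gcore_sub.
- exact: normal_fixedField_galois (gal_full perf 1%AS) C nC.
move=> N sXN galN; have [_ _ nN] := and3P galN.
have <- : fixedField 'Gal({:E} / N)%g = N by apply/galois_fixedField/gal_full.
apply: fixedFieldS; rewrite sub_gcore ?galS //.
apply: normal_norm; apply: normalField_normal nN.
by rewrite sub1v subvf.
Qed.

Lemma fix_adj (F : fieldType) (E : splittingFieldType F) (K : {subfield E}) (c : E)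
  (z : gal_of {:E}) :
  z \in 'Gal({:E} / K)%g -> z c = c -> z \in 'Gal({:E} / <<K; c>>%AS)%g.
Proof.
move=> Gz zc; rewrite -sub1set galois_connection ?subvf //; apply/FadjoinP; split.
  by rewrite -galois_connection ?subvf // sub1set.
by apply/fixedFieldP; [exact: memvf | move=> w /set1P ->].
Qed.

Definition Sset (F : fieldType) (E : splittingFieldType F) (K X M : {subfield E}) :
  {set gal_of {:E}} := [set x in 'Gal({:E} / K)%g | (x @: X <= M)%VS].

Lemma count_rho (F : fieldType) (E : splittingFieldType F) (K X M : {subfield E}) :
  perfect_field F -> (K <= M)%VS -> (K <= X)%VS ->
  rho K M X = #|[set ('Gal({:E} / X) :* x)%g | x in Sset K X M]|.
Proof.
move=> perf sKM sKX; rewrite /rho /rho_elt /nroots_in.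
have hc := prim_spec perf sKX; move: (prim_elt K X) hc => c hc.
set P := 'Gal({:E} / X)%G; set C := [set _ | _ in _].
have Zc x : (repr (P :* x)%g : gal_of {:E}) c = x c.
  have /rcosetP[p Pp ->] := mem_repr_rcoset P x.
  by rewrite galM ?memvf // (fixed_gal (subvf X) Pp) // -hc memv_adjoin.
have eqc x y : x \in 'Gal({:E} / K)%g -> y \in 'Gal({:E} / K)%g -> x c = y c ->
    (P :* x = P :* y)%g.
  move=> Gx Gy exy; apply/rcoset_eqP/rcosetP; exists (x * y^-1)%g; last by rewrite mulgKV.
  have -> : P = 'Gal({:E} / <<K; c>>%AS)%G by apply/val_inj; rewrite /= hc.
  apply: fix_adj; first by rewrite groupM ?groupV.
  by rewrite galM ?memvf // exy -galM ?memvf // mulgV gal_id.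
pose s0 := [seq (repr Z : gal_of {:E}) c | Z <- enum C].
have mem0 w : (w \in s0) = (w \in M) && root (minPoly K c) w.
  apply/mapP/andP => [[Z] | [Mw rw]].
    rewrite mem_enum => /imsetP[x]; rewrite inE => /andP[Gx sxM] -> ->.
    rewrite Zc; split; last exact: root_minPoly_gal (subvf K) Gx (memvf c).
    by apply: (subvP sxM); apply: memv_img; rewrite -hc memv_adjoin.
  have [x Gx xc] := normalField_root_minPoly (subvf K) (normalFieldf K) (memvf c) rw.
  exists (P :* x)%g; last by rewrite Zc.
  rewrite mem_enum; apply: imset_f; rewrite inE Gx /= -hc aimg_adjoin.
  have /andP[_ fK] : kHom K {:E} x by rewrite -gal_kHom ?subvf.
  by rewrite fixedSpace_limg // xc; apply/FadjoinP; split.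
have u0 : uniq s0.
  rewrite map_inj_in_uniq ?enum_uniq //.
  move=> Z1 Z2; rewrite !mem_enum => /imsetP[x]; rewrite inE => /andP[Gx _] ->.
  move=> /imsetP[y]; rewrite inE => /andP[Gy _] ->.
  rewrite !Zc; exact: eqc.
have sz0 : size s0 = #|C| by rewrite size_map -cardE.
rewrite -sz0.
have : roots_in_list (minPoly K c) M
         (epsilon (inhabits [::]) (roots_in_list (minPoly K c) M)).
  apply: epsilon_spec; exists s0; split => // w; rewrite mem0.
  by split => [/andP[] | []] // -> ->.
case=> us hs; apply: perm_size; apply: uniq_perm => // w.
by rewrite mem0; apply/idP/idP => [/hs[-> ->] // | /andP/hs].
Qed.
Local Close Scope ring_scope.
Unset Implicit Arguments.

Theorem theorem8p12 (F : fieldType) (E : splittingFieldType F)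
  (L K' M : {subfield E}) :
  perfect_field F ->
  galois 1%AS K' ->
  (L <= M)%VS ->
  lin_disjoint 1%AS (gal_closure 1%AS L) K' ->
  lin_disjoint 1%AS (gal_closure 1%AS M) K' ->
  rho 1%AS M L = rho K' (M * K')%AS (L * K')%AS.
Proof.
move=> perf galK' sLM dL dM.
have [sLLt [galLt _]] := gal_closure_spec L perf.
have [sMMt [galMt _]] := gal_closure_spec M perf.
move: (gal_closure 1%AS L) (gal_closure 1%AS M) dL dM sLLt galLt sMMt galMt.
move=> Lt Mt dL dM sLLt galLt sMMt galMt.
have GL := disj_mul perf dL; have GM := disj_mul perf dM.
rewrite (count_rho perf (sub1v M) (sub1v L)).
rewrite (count_rho perf (field_subvMl M K') (field_subvMl L K')) gal_prod.
set A := 'Gal({:E} / K')%G; set P := 'Gal({:E} / L)%G.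
set S := Sset 1%AS L M.
have AG : (A \subset 'Gal({:E} / 1%AS))%g by rewrite galS ?sub1v.
have ->: Sset K' (L * K')%AS (M * K')%AS = (S :&: A)%g.
  apply/setP => x; rewrite /S /Sset !inE.
  case Ax: (x \in A); rewrite ?andbF //= andbT.
  have Gx := subsetP AG x Ax; rewrite Gx /=.
  have /andP[_ fK] : kHom K' {:E} x by rewrite -gal_kHom ?subvf.
  rewrite aimgM (fixedSpace_limg fK).
  apply/idP/idP => [sub | sub]; last by apply: prodvSl.
  apply/subvP => v xv.
  have vMK : v \in (M * K')%VS := subvP sub v (subvP (field_subvMr _ K') v xv).
  have vMt : v \in Mt.
    have /and3P[_ _ nMt] := galMt.
    have : kAut 1 Mt x.
      apply: (@normalField_kAut _ _ 1%AS Mt {:E}%AS) nMt _.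
        by rewrite sub1v subvf.
      by rewrite -gal_kAut ?sub1v.
    case/andP => _ /eqP eMt.
    by rewrite -eMt; apply: (subvP (limgS _ (subv_trans sLM sMMt))).
  have <- : fixedField 'Gal({:E} / M)%g = M by apply/galois_fixedField/gal_full.
  apply/fixedFieldP; first exact: memvf.
  move=> r Rr; have Gr := subsetP (galS _ (sub1v M)) r Rr.
  move: Rr; rewrite -GM in Gr; case/mulsgP: Gr => n a' Nn Aa' -> Rr.
  rewrite galM ?memvf // (fixed_gal (subvf Mt) Nn vMt).
  apply: (fixed_gal (subvf _) _ vMK); rewrite gal_prod inE Aa' andbT.
  have -> : a' = (n^-1 * (n * a'))%g by rewrite mulKg.
  by rewrite groupM ?groupV // (subsetP (galS _ sMMt)).
have ->: [set (P :* x)%g | x in S] = [set (P :* x)%g | x in (S :&: A)%g].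
  apply/eqP; rewrite eqEsubset andbC imsetS ?subsetIl //=.
  apply/subsetP => _ /imsetP[x Sx ->].
  have := Sx; rewrite /S /Sset inE => /andP[Gx sx].
  rewrite -GL in Gx; case/mulsgP: Gx => n a' Nn Aa' xE.
  have Pn : n \in P := subsetP (galS _ sLLt) n Nn.
  have -> : (P :* x = P :* a')%g by apply/rcoset_eqP/rcosetP; exists n.
  apply: imset_f; rewrite inE Aa' andbT /S /Sset inE (subsetP AG) //=.
  have <- // : (x @: L)%VS = (a' @: L)%VS.
  apply: eq_in_limg => v Lv.
  by rewrite xE galM ?memvf // (fixed_gal (subvf L) Pn Lv).
set P' := ('Gal({:E} / L) :&: 'Gal({:E} / K'))%G.
have ePZ x : (P * (P' :* x))%g = (P :* x)%g.
  by rewrite mulgA mulGSid ?subsetIl.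
have -> : [set (P :* x)%g | x in (S :&: A)%g]
        = [set (P * Z)%g | Z in [set (P' :* x)%g | x in (S :&: A)%g]].
  by rewrite -imset_comp; apply: eq_imset => x /=; rewrite ePZ.
rewrite card_in_imset //.
move=> Z1 Z2 /imsetP[x Sx ->] /imsetP[y Sy ->] /=; rewrite !ePZ => e.
have /rcoset_eqP/rcosetP[p Pp xE] : (P :* x = P :* y)%g by [].
apply/rcoset_eqP/rcosetP; exists p => //.
rewrite inE Pp /=; have -> : p = (x * y^-1)%g by rewrite xE mulgK.
move: Sx Sy; rewrite !inE => /andP[_ Ax] /andP[_ Ay].
by rewrite groupM ?groupV.
Qed.
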